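(* Consider the problem of minimizing $f(x)+h(x)$ subject to $Ax=b$, with $A\in\mathbb R^{m\times n}$, $A\neq0$, $b\in\mathbb R^m$, and the setting below. Run the following Bregman dual Condat--V\~u algorithm with line search: choose $x^{(0)}\in\operatorname{int}(\operatorname{dom}\phi_{\mathrm p})\cap\operatorname{dom}h$, $z^{(-1)}=z^{(0)}\in\mathbb R^m$, $\tau_{-1},\sigma_{-1}>0$ and $\delta\in(0,1]$, and set $\beta=\sigma_{-1}/\tau_{-1}$. At iteration $k\ge0$, choose $\bar\theta_k\ge1$; for $i=0,1,2,\dots$ set $\theta_k=2^{-i}\bar\theta_k$, $\tau_k=\theta_k\tau_{k-1}$, $\sigma_k=\theta_k\sigma_{k-1}$, and compute \[\bar z^{(k+1)}=z^{(k)}+\theta_k(z^{(k)}-z^{(k-1)}),\quad x^{(k+1)}=\mathrm{prox}^{\phi_{\mathrm p}}_{\tau_kf}\big(x^{(k)},\tau_k(A^T\bar z^{(k+1)}+\nabla h(x^{(k)}))\big),\quad z^{(k+1)}=z^{(k)}+\sigma_k(Ax^{(k+1)}-b);\] accept these iterates and parameters (and stop the inner loop) as soon as \[\langle z^{(k+1)}-\bar z^{(k+1)},A(x^{(k+1)}-x^{(k)})\rangle+h(x^{(k+1)})-h(x^{(k)})-\langle\nabla h(x^{(k)}),x^{(k+1)}-x^{(k)}\rangle\le\frac{\delta^2}{\tau_k}d_{\mathrm p}(x^{(k+1)},x^{(k)})+\frac1{2\sigma_k}\|\bar z^{(k+1)}-z^{(k+1)}\|^2 .\] Then at every iteration the backtracking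 terminates, and the accepted stepsizes satisfy, for all $k\ge0$, \[\tau_k\ge\tau_{\min}:=\min\Big\{\tau_{-1},\ \frac{-L+\sqrt{L^2+4\delta^2\beta\|A\|^2}}{4\beta\|A\|^2}\Big\},\qquad\sigma_k\ge\sigma_{\min}:=\beta\tau_{\min}.\]
   Context: $f:\mathbb R^n\to\mathbb R\cup\{+\infty\}$ and $h$ are closed convex, $h$ differentiable on its open convex domain, $f+h$ proper. A Bregman kernel $\phi_{\mathrm p}$ on $\mathbb R^n$ is convex with $\operatorname{int}(\operatorname{dom}\phi_{\mathrm p})\ne\emptyset$, continuous on its domain, continuously differentiable on the interior; $d_{\mathrm p}(x,y)=\phi_{\mathrm p}(x)-\phi_{\mathrm p}(y)-\langle\nabla\phi_{\mathrm p}(y),x-y\rangle$ on $\operatorname{dom}\phi_{\mathrm p}\times\operatorname{int}(\operatorname{dom}\phi_{\mathrm p})$, with $d_{\mathrm p}(x,x')\ge\frac12\|x-x'\|_{\mathrm p}^2$ for a norm $\|\cdot\|_{\mathrm p}$. $\mathrm{prox}^{\phi_{\mathrm p}}_F(y,a)=\operatorname{argmin}_x\big(F(x)+\langle a,x\rangle+d_{\mathrm p}(x,y)\big)$, assumed to be a unique point of $\operatorname{int}(\operatorname{dom}\phi_{\mathrm p})$ for all $a$ and $y\in\operatorname{int}(\operatorname{dom}\phi_{\mathrm p})$. Also $\operatorname{dom}\phi_{\mathrm p}\subseteq\operatorname{dom}h$ and $h(x)-h(x')-\langle\nabla h(x'),x-x'\rangle\le L\,d_{\mathrm p}(x,x')$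 for all $(x,x')\in\operatorname{dom}d_{\mathrm p}$, for some $L>0$. $\|\cdot\|$ is the Euclidean norm and $\|A\|=\sup_{u\ne0}\|Au\|/\|u\|_{\mathrm p}$. *)

(* Defs.v *)
From HB Require Import structures.
From mathcomp Require Import all_boot all_order all_algebra.
From mathcomp Require Import all_classical all_reals all_analysis.
Set Implicit Arguments. Unset Strict Implicit. Unset Printing Implicit Defensive.
Import Order.TTheory GRing.Theory Num.Theory.
Import numFieldNormedType.Exports.
Local Open Scope classical_set_scope.
Local Open Scope ring_scope.

Section Defs.
Variable R : realType.

Definition dotp (p : nat) (u v : 'cV[R]_p) : R := (u^T *m v) 0 0.
Definition enorm (p : nat) (u : 'cV[R]_p) : R := Num.sqrt (dotp u u).

Definition is_norm (n : nat) (N : 'cV[R]_n -> R) : Prop :=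
  [/\ forall u, 0 <= N u,
      forall u, N u = 0 -> u = 0,
      forall (a : R) u, N (a *: u) = `|a| * N u
    & forall u v, N (u + v) <= N u + N v].

Definition opnorm (m n : nat) (N : 'cV[R]_n -> R) (A : 'M[R]_(m, n)) : R :=
  sup [set r | exists u : 'cV[R]_n, u != 0 /\ r = enorm (A *m u) / N u].

Definition cvx_set (n : nat) (D : set 'cV[R]_n) : Prop :=
  forall x y (t : R), D x -> D y -> 0 <= t <= 1 -> D (t *: x + (1 - t) *: y).

Definition convex_on (n : nat) (D : set 'cV[R]_n) (g : 'cV[R]_n -> R) : Prop :=
  cvx_set D /\
  forall x y (t : R), D x -> D y -> 0 <= t <= 1 ->
    g (t *: x + (1 - t) *: y) <= t * g x + (1 - t) * g y.

Definition no_minfty (n : nat) (F : 'cV[R]_n -> \bar R) : Prop :=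
  forall x, F x != -oo%E.

Definition convex_ext (n : nat) (F : 'cV[R]_n -> \bar R) : Prop :=
  forall x y (t : R), 0 <= t <= 1 -> (F x < +oo)%E -> (F y < +oo)%E ->
    (F (t *: x + (1 - t) *: y)%R <= t%:E * F x + (1 - t)%:E * F y)%E.

(* closed = lower semicontinuous = all sublevel sets closed *)
Definition closed_ext (n : nat) (F : 'cV[R]_n -> \bar R) : Prop :=
  forall a : R, closed [set x | (F x <= a%:E)%E].

Definition ext (n : nat) (D : set 'cV[R]_n) (g : 'cV[R]_n -> R) : 'cV[R]_n -> \bar R :=
  fun x => if x \in D then (g x)%:E else +oo%E.

Definition grad (n : nat) (g : 'cV[R]_n -> R) (x : 'cV[R]_n) : 'cV[R]_n :=
  \col_i ('d g x (delta_mx i 0)).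

Definition bdist (n : nat) (phi : 'cV[R]_n -> R) (x y : 'cV[R]_n) : R :=
  phi x - phi y - dotp (grad phi y) (x - y).

(* x is a minimizer of  t f(u) + <a,u> + d_p(u,y)  (over dom phi; the
   objective is +oo outside dom phi) *)
Definition is_prox (n : nat) (phi : 'cV[R]_n -> R) (Dphi : set 'cV[R]_n)
  (f : 'cV[R]_n -> \bar R) (t : R) (y a x : 'cV[R]_n) : Prop :=
  Dphi x /\
  forall u, Dphi u ->
    (t%:E * f x + (dotp a x + bdist phi x y)%R%:E <=
     t%:E * f u + (dotp a u + bdist phi u y)%R%:E)%E.

Definition trial_iter (m n : nat) (phi : 'cV[R]_n -> R) (Dphi : set 'cV[R]_n)
  (f : 'cV[R]_n -> \bar R) (gh : 'cV[R]_n -> 'cV[R]_n)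
  (A : 'M[R]_(m, n)) (b : 'cV[R]_m)
  (xk : 'cV[R]_n) (zk zkm1 : 'cV[R]_m) (tauprev sigprev theta : R)
  (zbar : 'cV[R]_m) (x1 : 'cV[R]_n) (z1 : 'cV[R]_m) (tau sigma : R) : Prop :=
  [/\ tau = theta * tauprev, sigma = theta * sigprev,
      zbar = zk + theta *: (zk - zkm1),
      is_prox phi Dphi f tau xk (tau *: (A^T *m zbar + gh xk)) x1
    & z1 = zk + sigma *: (A *m x1 - b)].

Definition accept_test (m n : nat) (phi : 'cV[R]_n -> R) (hv : 'cV[R]_n -> R)
  (gh : 'cV[R]_n -> 'cV[R]_n) (A : 'M[R]_(m, n)) (delta : R)
  (xk : 'cV[R]_n) (zbar : 'cV[R]_m) (x1 : 'cV[R]_n) (z1 : 'cV[R]_m)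
  (tau sigma : R) : Prop :=
  dotp (z1 - zbar) (A *m (x1 - xk)) + hv x1 - hv xk - dotp (gh xk) (x1 - xk)
  <= delta ^+ 2 / tau * bdist phi x1 xk + (2 * sigma)^-1 * (enorm (zbar - z1)) ^+ 2.

(* previous-index helpers: z^{(k-1)} with z^{(-1)} = z^{(0)},
   tau_{k-1} with tau_{-1} given *)
Definition prevz (m : nat) (z : nat -> 'cV[R]_m) (k : nat) : 'cV[R]_m :=
  if k is k'.+1 then z k' else z 0%N.
Definition prevr (r : nat -> R) (rm1 : R) (k : nat) : R :=
  if k is k'.+1 then r k' else rm1.

(* The sequences form a run of the algorithm for iterations k = 0..K-1:
   x k = x^(k), z k = z^(k), zbar (k+1) = zbar^(k+1),
   tau k = tau_k, sigma k = sigma_k, theta k = theta_k, thetabar k. *)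
Definition valid_run (m n : nat) (phi : 'cV[R]_n -> R) (Dphi : set 'cV[R]_n)
  (f : 'cV[R]_n -> \bar R) (hv : 'cV[R]_n -> R) (gh : 'cV[R]_n -> 'cV[R]_n)
  (A : 'M[R]_(m, n)) (b : 'cV[R]_m) (delta taum1 sigm1 : R) (K : nat)
  (x : nat -> 'cV[R]_n) (z zbar : nat -> 'cV[R]_m)
  (tau sigma theta thetabar : nat -> R) : Prop :=
  forall k, (k < K)%N ->
    1 <= thetabar k /\
    exists i : nat,
      [/\ theta k = (2 ^+ i)^-1 * thetabar k,
          trial_iter phi Dphi f gh A b (x k) (z k) (prevz z k)
            (prevr tau taum1 k) (prevr sigma sigm1 k) (theta k)
            (zbar k.+1) (x k.+1) (z k.+1) (tau k) (sigma k),
          accept_test phi hv gh A delta (x k) (zbar k.+1) (x k.+1) (z k.+1)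
            (tau k) (sigma k)
        & forall j : nat, (j < i)%N ->
            forall zb x1 z1 t s,
              trial_iter phi Dphi f gh A b (x k) (z k) (prevz z k)
                (prevr tau taum1 k) (prevr sigma sigm1 k)
                ((2 ^+ j)^-1 * thetabar k) zb x1 z1 t s ->
              ~ accept_test phi hv gh A delta (x k) zb x1 z1 t s].

End Defs.

(* Main.v *)
Require Import Defs.
From HB Require Import structures.
From mathcomp Require Import all_boot all_order all_algebra.
From mathcomp Require Import all_classical all_reals all_analysis.
From mathcomp Require Import ring lra.
Import Order.TTheory GRing.Theory Num.Theory.
Import numFieldNormedType.Exports.
Local Open Scope classical_set_scope.
Local Open Scope ring_scope.

Section H.
Variable R : realType.

Lemma dotpE p (u v : 'cV[R]_p) : dotp u v = \sum_i u i 0 * v i 0.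
Proof. by rewrite /dotp !mxE; apply: eq_bigr => i _; rewrite !mxE. Qed.

Lemma dotp_ge0 p (u : 'cV[R]_p) : 0 <= dotp u u.
Proof. by rewrite dotpE; apply: sumr_ge0 => i _; rewrite -expr2 sqr_ge0. Qed.

Lemma enorm_sqr p (u : 'cV[R]_p) : enorm u ^+ 2 = dotp u u.
Proof. by rewrite /enorm sqr_sqrtr // dotp_ge0. Qed.

Lemma enorm_ge0 p (u : 'cV[R]_p) : 0 <= enorm u.
Proof. exact: sqrtr_ge0. Qed.

Lemma enormN p (u : 'cV[R]_p) : enorm (- u) = enorm u.
Proof.
rewrite /enorm !dotpE; congr Num.sqrt; apply: eq_bigr => i _.
by rewrite !mxE mulrNN.
Qed.

Lemma enorm_gt0 p (u : 'cV[R]_p) : u != 0 -> 0 < enorm u.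
Proof.
move=> u0; rewrite /enorm sqrtr_gt0 lt_neqAle dotp_ge0 andbT.
apply/negP => /eqP H; move/negP: u0; apply; apply/eqP/matrixP => i j.
rewrite (ord1 j) mxE; rewrite dotpE in H.
have hp : forall k : 'I_p, true -> 0 <= u k 0 * u k 0.
  by move=> k _; rewrite -expr2 sqr_ge0.
have := psumr_eq0P hp (esym H).
move=> /(_ i isT) /eqP; rewrite mulf_eq0 orbb => /eqP.
by [].
Qed.

Lemma young p (u v : 'cV[R]_p) (s : R) : 0 < s ->
  dotp u v <= (2 * s)^-1 * enorm u ^+ 2 + s / 2 * enorm v ^+ 2.
Proof.
move=> s0; rewrite !enorm_sqr !dotpE !mulr_sumr -big_split /=.
apply: ler_sum => i _.
set a := u i 0; set b := v i 0.
have h : 2 * s * (a * b) <= a * a + s * s * (b * b).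
  have := sqr_ge0 (a - s * b); rewrite expr2; nra.
have e1 : (2 * s)^-1 * (a * a) + s / 2 * (b * b)
    = (a * a + s * s * (b * b)) / (2 * s).
  by field; rewrite lt0r_neq0.
rewrite e1 ler_pdivlMr; last by rewrite mulr_gt0.
lra.
Qed.

Lemma entry_le_norm p q (M : 'M[R]_(p, q)) i j : `|M i j| <= `|M|.
Proof.
rewrite [leRHS]/Num.Def.normr /= mx_normrE.
exact: (@le_bigmax _ _ _ 0 (fun ij : 'I_p * 'I_q => `|M ij.1 ij.2|) (i, j)).
Qed.

Section Nrm.
Variables (n : nat) (Np : 'cV[R]_n -> R).
Hypothesis hN : is_norm Np.

Lemma Np0 : Np 0 = 0.
Proof. case: hN => _ _ hZ _; by have := hZ 0 0; rewrite scale0r normr0 mul0r. Qed.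

Lemma NpN u : Np (- u) = Np u.
Proof. case: hN => _ _ hZ _; by rewrite -scaleN1r hZ normrN1 mul1r. Qed.

Lemma Np_ge0 u : 0 <= Np u.
Proof. by case: hN. Qed.

Lemma Np_sum k (F : 'I_k -> 'cV[R]_n) : Np (\sum_i F i) <= \sum_i Np (F i).
Proof.
case: hN => _ _ _ hD.
elim/big_rec2: _ => [|i y1 y2 _ IH]; first by rewrite Np0.
by apply: le_trans (hD _ _) _; rewrite lerD2l.
Qed.

Lemma Np_upper u : Np u <= (\sum_i Np (delta_mx i 0)) * `|u^T|.
Proof.
case: hN => _ _ hZ _.
rewrite {1}(matrix_sum_delta u).
under eq_bigr do rewrite big_ord1.
apply: le_trans (Np_sum _ _) _.
rewrite mulr_suml; apply: ler_sum => i _.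
rewrite hZ mulrC ler_wpM2l ?Np_ge0 //.
by have := @entry_le_norm 1 n u^T 0 i; rewrite mxE.
Qed.

Lemma Np_lip u v : `|Np u - Np v| <= Np (u - v).
Proof.
case: hN => _ _ _ hD.
rewrite ler_norml; apply/andP; split.
  have := hD (v - u) u; rewrite subrK -opprB NpN; lra.
have := hD (u - v) v; rewrite subrK; lra.
Qed.

Definition Nr (v : 'rV[R]_n) := Np v^T.

Lemma Nr_cont : continuous Nr.
Proof.
move=> x; apply/(@cvgrPdist_lt _ _ _ (nbhs x) (nbhs_filter x)) => e e0.
set C := \sum_i Np (delta_mx i 0 : 'cV[R]_n).
have C0 : 0 <= C by apply: sumr_ge0 => i _; exact: Np_ge0.
have Cp : 0 < C + 1 by lra.
have d0 : 0 < e / (C + 1) by rewrite divr_gt0.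
near=> y.
rewrite /Nr; apply: le_lt_trans (Np_lip _ _) _.
rewrite -linearB /=.
apply: le_lt_trans (Np_upper _) _; rewrite trmxK.
have : `|x - y| < e / (C + 1).
  near: y; exact: (@cvgr_dist_lt _ _ _ (nbhs x) (nbhs_filter x) id x cvg_id _ d0).
rewrite ltr_pdivlMr // => h.
apply: le_lt_trans h.
rewrite mulrC ler_wpM2l // lerDl.
Unshelve. all: by end_near.
Qed.


Lemma trmxZ' p q (k : R) (M : 'M[R]_(p, q)) : (k *: M)^T = k *: M^T.
Proof. by apply/matrixP => i j; rewrite !mxE. Qed.

Lemma Np_lower : exists2 c, 0 < c & forall u, c * `|u^T| <= Np u.
Proof.
case: (hN) => _ hN0 hZ _.
pose S := [set v : 'rV[R]_n | `|v| = 1].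
have inS u : u^T != 0 -> S (`|u^T|^-1 *: u^T).
  move=> u0; rewrite /S /= normrZ ger0_norm ?invr_ge0 // mulVf //.
  by rewrite normr_eq0.
have key c u : 0 <= c -> (forall v, S v -> c <= Nr v) -> c * `|u^T| <= Np u.
  move=> c0 hc; have [->|u0] := eqVneq u^T 0.
    by rewrite normr0 mulr0 Np_ge0.
  have k0 : 0 < `|u^T| by rewrite normr_gt0.
  have := hc _ (inS u u0); rewrite /Nr trmxZ' trmxK hZ ger0_norm ?invr_ge0 //.
  by rewrite ler_pdivlMl // mulrC.
have [[v0 Sv0] | S0] := pselect (exists v, S v); last first.
  exists 1 => // u; apply: key => // v Sv; exfalso; apply: S0; by exists v.
have cS : closed S.
  have := @preimage_closed _ _ (fun v : 'rV[R]_n => `|v|) [set 1].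
  apply => [t _|]; [exact: norm_continuous | exact: closed_eq].
have bS : bounded_set S.
  rewrite /= /bounded_near; near=> M => v Sv /=; rewrite Sv.
  by near: M; apply: nbhs_pinfty_ge.
have kS := bounded_closed_compact bS cS.
have cN : {within S, continuous Nr}.
  by apply: continuous_subspaceT; exact: Nr_cont.
have [cm cmS hcm] := compact_EVT_min (ex_intro _ v0 Sv0) kS cN.
rewrite inE in cmS.
have cm0 : cm^T != 0.
  apply/eqP => h; move: cmS; rewrite /S /= -[cm]trmxK h trmx0 normr0.
  by move=> /esym/eqP; rewrite oner_eq0.
have c0 : 0 < Nr cm.
  rewrite lt_neqAle Np_ge0 andbT; apply/eqP => /esym h.
  by move: cm0; rewrite (hN0 _ h) eqxx.
exists (Nr cm) => // u; apply: key; first exact: ltW.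
by move=> v Sv; apply: hcm; rewrite inE.
Unshelve. all: by end_near.
Qed.

End Nrm.

Lemma enorm_Amu m n (A : 'M[R]_(m, n)) :
  exists2 M, 0 <= M & forall u, enorm (A *m u) <= M * `|u^T|.
Proof.
exists (Num.sqrt (\sum_i (\sum_j `|A i j|) ^+ 2)); first exact: sqrtr_ge0.
move=> u; set mu := `|u^T|.
have mu0 : 0 <= mu by exact: normr_ge0.
rewrite -[mu in leRHS]ger0_norm // -sqrtr_sqr -sqrtrM; last first.
  by apply: sumr_ge0 => i _; rewrite sqr_ge0.
rewrite /enorm ler_sqrt; last by rewrite mulr_ge0 ?sqr_ge0 // sumr_ge0 // => i _; rewrite sqr_ge0.
rewrite dotpE mulr_suml; apply: ler_sum => i _.
have h : `|(A *m u) i 0| <= (\sum_j `|A i j|) * mu.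
  rewrite mxE mulr_suml; apply: le_trans (ler_norm_sum _ _ _) _.
  apply: ler_sum => j _; rewrite normrM ler_wpM2l //.
  by have := @entry_le_norm 1 n u^T 0 j; rewrite mxE.
apply: le_trans (ler_norm _) _; rewrite normrM -exprMn expr2.
by apply: ler_pM.
Qed.

Lemma opnorm_bound m n (Np : 'cV[R]_n -> R) (A : 'M[R]_(m, n)) :
  is_norm Np -> A != 0 ->
  0 < opnorm Np A /\ forall u, enorm (A *m u) <= opnorm Np A * Np u.
Proof.
move=> hN A0.
have [c c0 hc] := @Np_lower n Np hN.
have [M M0 hM] := @enorm_Amu m n A.
pose S := [set r | exists u : 'cV[R]_n, u != 0 /\ r = enorm (A *m u) / Np u].
have Npos u : u != 0 -> 0 < Np u.
  move=> u0; rewrite lt_neqAle (@Np_ge0 n Np hN) andbT; apply/eqP => /esym h.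
  by case: hN => _ hN0 _ _; move: u0; rewrite (hN0 _ h) eqxx.
have [j colj] : exists j : 'I_n, A *m delta_mx j (0:'I_1) != 0.
  apply: contrapT => nj; move/negP: A0; apply; apply/eqP/matrixP => i j.
  have : A *m delta_mx j (0:'I_1) = 0.
    by apply/eqP; apply: contrapT => h; apply: nj; exists j; apply/negP.
  by rewrite -colE => /matrixP/(_ i 0); rewrite !mxE.
have hS : has_sup S.
  split; first by exists (enorm (A *m delta_mx j (0:'I_1)) / Np (delta_mx j (0:'I_1))),
    (delta_mx j (0:'I_1)); split => //; apply: contraNneq colj => ->; rewrite mulmx0.
  exists (M / c) => r [u [u0 ->]].
  rewrite ler_pdivrMr ?Npos // mulrAC ler_pdivlMr //.
  apply: (@le_trans _ _ (M * `|u^T| * c)).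
    by rewrite ler_wpM2r // ltW.
  by rewrite -mulrA ler_wpM2l // mulrC hc.
have ub := sup_upper_bound hS.
have d0 : delta_mx j (0:'I_1) != 0 :> 'cV[R]_n.
  by apply: contraNneq colj => ->; rewrite mulmx0.
split.
  apply: (@lt_le_trans _ _ (enorm (A *m delta_mx j (0:'I_1)) / Np (delta_mx j (0:'I_1)))).
    by rewrite divr_gt0 ?Npos // enorm_gt0.
  by apply: ub; exists (delta_mx j (0:'I_1)).
move=> u; have [->|u0] := eqVneq u 0.
  rewrite mulmx0 (@Np0 n Np hN) mulr0 /enorm dotpE big1 ?sqrtr0 // => i _.
  by rewrite mxE mul0r.
have := ub _ (ex_intro _ u (conj u0 erefl)).
by rewrite ler_pdivrMr ?Npos.
Qed.


Lemma quad (beta nA L delta t : R) : 0 < beta -> 0 < nA -> 0 < L -> 0 < t ->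
  t <= 2 * ((- L + Num.sqrt (L ^+ 2 + 4 * delta ^+ 2 * beta * nA ^+ 2))
         / (4 * beta * nA ^+ 2)) ->
  beta * nA ^+ 2 * t ^+ 2 + L * t <= delta ^+ 2.
Proof.
move=> b0 n0 L0 t0.
set S := Num.sqrt _.
have a0 : 0 < beta * nA ^+ 2 by rewrite mulr_gt0 // exprn_gt0.
have S0 : 0 <= S by exact: sqrtr_ge0.
have S2 : S ^+ 2 = L ^+ 2 + 4 * delta ^+ 2 * beta * nA ^+ 2.
  rewrite sqr_sqrtr //; apply: addr_ge0; first exact: sqr_ge0.
  apply: mulr_ge0; last exact: sqr_ge0. apply: mulr_ge0; last exact: ltW. by apply: mulr_ge0 => //; exact: sqr_ge0.
have -> : 2 * ((- L + S) / (4 * beta * nA ^+ 2)) = (- L + S) / (2 * (beta * nA ^+ 2)).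
  field.
  by rewrite !lt0r_neq0.
rewrite ler_pdivlMr; last by rewrite mulr_gt0.
move=> h.
set a := beta * nA ^+ 2 in a0 h *.
have h1 : 0 <= 2 * a * t + L by rewrite addr_ge0 ?ltW // mulr_gt0 // mulr_gt0.
have h2 : 2 * a * t + L <= S by lra.
have h3 : (2 * a * t + L) ^+ 2 <= S ^+ 2.
  by rewrite !expr2; apply: ler_pM.
have e : 4 * delta ^+ 2 * beta * nA ^+ 2 = 4 * a * delta ^+ 2.
  by rewrite /a; ring.
rewrite S2 e in h3.
have h4 : 4 * a * (a * t ^+ 2 + L * t) <= 4 * a * delta ^+ 2.
  have -> : 4 * a * (a * t ^+ 2 + L * t) = (2 * a * t + L) ^+ 2 - L ^+ 2 by ring.
  lra.
by rewrite ler_pM2l in h4; last by rewrite mulr_gt0.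
Qed.


Lemma accept_ok m n (phi : 'cV[R]_n -> R) (Dphi : set 'cV[R]_n)
  (f : 'cV[R]_n -> \bar R) (hv : 'cV[R]_n -> R) (A : 'M[R]_(m, n)) b
  (delta : R) (Np : 'cV[R]_n -> R) (L nA beta : R)
  xk zk zkm1 tp sp theta zb x1 z1 (t s : R) :
  (forall x x', Dphi x -> (interior Dphi) x' ->
     hv x - hv x' - dotp (grad hv x') (x - x') <= L * bdist phi x x') ->
  (forall x y, Dphi x -> (interior Dphi) y ->
     Np (x - y) ^+ 2 / 2 <= bdist phi x y) ->
  (forall u, enorm (A *m u) <= nA * Np u) -> 0 <= nA -> 0 < beta ->
  (interior Dphi) xk -> 0 < t -> s = beta * t ->
  beta * nA ^+ 2 * t ^+ 2 + L * t <= delta ^+ 2 ->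
  trial_iter phi Dphi f (grad hv) A b xk zk zkm1 tp sp theta zb x1 z1 t s ->
  accept_test phi hv (grad hv) A delta xk zb x1 z1 t s.
Proof.
move=> hsm hst hA nA0 b0 xkI t0 st hq [_ _ _ [Dx1 _] _].
rewrite /accept_test.
set d := x1 - xk; set w := z1 - zb.
have s0 : 0 < s by rewrite st mulr_gt0.
have B := hst _ _ Dx1 xkI; rewrite -/d in B.
have H := hsm _ _ Dx1 xkI; rewrite -/d in H.
have Y := @young m w (A *m d) s s0.
have E : enorm (zb - z1) = enorm w by rewrite -enormN opprB.
rewrite E.
set bd := bdist phi x1 xk in B H *.
set P := enorm (A *m d) ^+ 2 in Y *.
set Q := Np d ^+ 2 in B.
have Q0 : 0 <= Q by exact: sqr_ge0.
have bd0 : 0 <= bd by lra.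
have F0 : P <= nA ^+ 2 * Q.
  rewrite /P /Q -exprMn !expr2; apply: ler_pM; try exact: enorm_ge0; exact: hA.
have F1 : s / 2 * P <= s / 2 * (nA ^+ 2 * Q).
  by rewrite ler_wpM2l // divr_ge0 // ltW.
have F2 : s / 2 * (nA ^+ 2 * Q) <= s * nA ^+ 2 * bd.
  have -> : s / 2 * (nA ^+ 2 * Q) = s * nA ^+ 2 * (Q / 2) by ring.
  by rewrite ler_wpM2l // mulr_ge0 ?sqr_ge0 // ltW.
have F3 : s * nA ^+ 2 + L <= delta ^+ 2 / t.
  rewrite ler_pdivlMr // st.
  have -> : (beta * t * nA ^+ 2 + L) * t = beta * nA ^+ 2 * t ^+ 2 + L * t by ring.
  exact: hq.
have F4 : s * nA ^+ 2 * bd + L * bd <= delta ^+ 2 / t * bd.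
  by rewrite -mulrDl ler_wpM2r.
lra.
Qed.

Lemma trial_exists m n (phi : 'cV[R]_n -> R) (Dphi : set 'cV[R]_n)
  (f : 'cV[R]_n -> \bar R) (gh : 'cV[R]_n -> 'cV[R]_n) (A : 'M[R]_(m, n)) b
  xk zk zkm1 (tp sp theta : R) :
  (forall (t : R) (y a : 'cV[R]_n), 0 < t -> (interior Dphi) y ->
     exists x, [/\ is_prox phi Dphi f t y a x, (interior Dphi) x &
       forall x', is_prox phi Dphi f t y a x' -> x' = x]) ->
  (interior Dphi) xk -> 0 < theta * tp ->
  exists zb x1 z1,
    trial_iter phi Dphi f gh A b xk zk zkm1 tp sp theta zb x1 z1
      (theta * tp) (theta * sp).
Proof.
move=> prox_ok xkI t0.
pose zb := zk + theta *: (zk - zkm1).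
have [x1 [hp _ _]] := prox_ok (theta * tp) xk
  ((theta * tp) *: (A^T *m zb + gh xk)) t0 xkI.
exists zb, x1, (zk + (theta * sp) *: (A *m x1 - b)).
by split.
Qed.

End H.

Theorem mainTheorem6 (R : realType) (m n : nat)
  (f : 'cV[R]_n -> \bar R) (Dh : set 'cV[R]_n) (hv : 'cV[R]_n -> R)
  (phi : 'cV[R]_n -> R) (Dphi : set 'cV[R]_n) (Np : 'cV[R]_n -> R) (L : R)
  (A : 'M[R]_(m, n)) (b : 'cV[R]_m)
  (f_real : no_minfty f) (f_conv : convex_ext f) (f_closed : closed_ext f)
  (h_conv : convex_ext (ext Dh hv)) (h_closed : closed_ext (ext Dh hv))
  (Dh_open : open Dh) (Dh_conv : cvx_set Dh)
  (h_diff : forall x, Dh x -> differentiable hv x)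
  (fh_proper : exists x, Dh x /\ (f x < +oo)%E)
  (phi_conv : convex_on Dphi phi)
  (Dphi_int : exists x, (interior Dphi) x)
  (phi_cont : {within Dphi, continuous phi})
  (phi_diff : forall x, (interior Dphi) x -> differentiable phi x)
  (phi_C1 : {within interior Dphi, continuous (grad phi)})
  (Np_norm : is_norm Np)
  (dp_strong : forall x y, Dphi x -> (interior Dphi) y ->
     Np (x - y) ^+ 2 / 2 <= bdist phi x y)
  (prox_ok : forall (t : R) (y a : 'cV[R]_n), 0 < t -> (interior Dphi) y ->
     exists x, [/\ is_prox phi Dphi f t y a x, (interior Dphi) x &
       forall x', is_prox phi Dphi f t y a x' -> x' = x])
  (Dphi_Dh : Dphi `<=` Dh)
  (L_pos : 0 < L)
  (h_rel_smooth : forall x x', Dphi x -> (interior Dphi) x' ->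
     hv x - hv x' - dotp (grad hv x') (x - x') <= L * bdist phi x x')
  (A_neq0 : A != 0)
  (delta taum1 sigm1 : R)
  (delta_pos : 0 < delta) (delta_le1 : delta <= 1)
  (taum1_pos : 0 < taum1) (sigm1_pos : 0 < sigm1)
  (K : nat) (x : nat -> 'cV[R]_n) (z zbar : nat -> 'cV[R]_m)
  (tau sigma theta thetabar : nat -> R)
  (x0_in : (interior Dphi) (x 0%N) /\ Dh (x 0%N))
  (run : valid_run phi Dphi f hv (grad hv) A b delta taum1 sigm1 K
           x z zbar tau sigma theta thetabar) :
  let beta := sigm1 / taum1 in
  let nA := opnorm Np A in
  let tau_min := Num.min taum1
      ((- L + Num.sqrt (L ^+ 2 + 4 * delta ^+ 2 * beta * nA ^+ 2))
         / (4 * beta * nA ^+ 2)) in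
  (forall tb : R, 1 <= tb ->
     exists (i : nat) zb x1 z1 t s,
       trial_iter phi Dphi f (grad hv) A b (x K) (z K) (prevz z K)
         (prevr tau taum1 K) (prevr sigma sigm1 K) ((2 ^+ i)^-1 * tb)
         zb x1 z1 t s /\
       accept_test phi hv (grad hv) A delta (x K) zb x1 z1 t s) /\
  (forall k, (k < K)%N -> tau_min <= tau k /\ beta * tau_min <= sigma k).
Proof.
move=> beta nA tau_min.
have [nA0 hA] := @opnorm_bound R m n Np A Np_norm A_neq0.
rewrite -/nA in nA0 hA.
have b0 : 0 < beta by rewrite divr_gt0.
rewrite /tau_min; set T2 := (- L + _) / _.
have th0 k i : (k < K)%N -> theta k = (2 ^+ i)^-1 * thetabar k -> 0 < theta k.
  move=> kK ->; have [tb1 _] := run k kK.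
  by rewrite mulr_gt0 ?invr_gt0 ?exprn_gt0 //; lra.
have inv : forall k, (k <= K)%N -> [/\ (interior Dphi) (x k),
    0 < prevr tau taum1 k & prevr sigma sigm1 k = beta * prevr tau taum1 k].
  elim=> [_|k IH kK].
    split => //; first exact: x0_in.1.
    by rewrite /= /beta divfK // lt0r_neq0.
  have [I1 p1 s1] := IH (ltnW kK).
  have [tb1 [i [th tr acc _]]] := run k kK.
  have t0 := th0 k i kK th.
  case: tr => tk sk _ prox _.
  have tk0 : 0 < tau k by rewrite tk mulr_gt0.
  have [xx [_ I2 uq]] := prox_ok _ (x k) (tau k *: (A^T *m zbar k.+1 + grad hv (x k))) tk0 I1.
  split => /=; first by rewrite (uq _ prox).
    exact: tk0.
  by rewrite sk tk s1; ring.
have S0 : L < Num.sqrt (L ^+ 2 + 4 * delta ^+ 2 * beta * nA ^+ 2).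
  have hp : 0 < 4 * delta ^+ 2 * beta * nA ^+ 2.
    by rewrite !mulr_gt0 // ?exprn_gt0 // invr_gt0.
  have : Num.sqrt (L ^+ 2) < Num.sqrt (L ^+ 2 + 4 * delta ^+ 2 * beta * nA ^+ 2).
    rewrite ltr_sqrt; first by rewrite ltrDl.
    by rewrite addr_gt0 ?exprn_gt0.
  by rewrite sqrtr_sqr ger0_norm // ltW.
have T20 : 0 < T2.
  have den : 0 < 4 * beta * nA ^+ 2.
    by apply: mulr_gt0; [apply: mulr_gt0 | exact: exprn_gt0].
  by apply: divr_gt0 den; rewrite addrC subr_gt0.
split.
  move=> tb tb1.
  have [IK pK sK] := inv K (leqnn K).
  have [i hX] : exists i, tb * prevr tau taum1 K / (2 * T2) < 2 ^+ i.
    by eexists; apply: upper_nthrootP (leqnn _).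
  have th_pos : 0 < (2 ^+ i)^-1 * tb.
    by rewrite mulr_gt0 ?invr_gt0 ?exprn_gt0 //; lra.
  have t0 : 0 < (2 ^+ i)^-1 * tb * prevr tau taum1 K by apply: mulr_gt0.
  have [zb [x1 [z1 tr]]] := @trial_exists R m n phi Dphi f (grad hv) A b
    (x K) (z K) (prevz z K) _ (prevr sigma sigm1 K) _ prox_ok IK t0.
  exists i, zb, x1, z1, ((2 ^+ i)^-1 * tb * prevr tau taum1 K),
    ((2 ^+ i)^-1 * tb * prevr sigma sigm1 K); split => //.
  apply: (@accept_ok R m n phi Dphi f hv A b delta Np L nA beta _ _ _ _ _ _ _ _ _ _ _ h_rel_smooth dp_strong hA (ltW nA0) b0 IK t0 _ _ tr).
    by rewrite sK; ring.
  apply: (@quad R beta nA L delta _ b0 nA0 L_pos t0).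
  rewrite -mulrA mulrC -ler_pdivlMr ?exprn_gt0 // mulrC.
  rewrite -/T2 invrK [leLHS]mulrC [leRHS]mulrC.
  rewrite ltr_pdivrMr in hX; last by apply: mulr_gt0.
  exact: ltW.

have step : forall k, (k < K)%N -> Num.min (prevr tau taum1 k) T2 <= tau k.
  move=> k kK.
  have [Ik pk sk] := inv k (ltnW kK).
  have [tbk1 [i [th tr acc rej]]] := run k kK.
  case: tr => tk _ _ _ _.
  case: i th rej => [|j] th rej.
    rewrite ge_min; apply/orP; left.
    rewrite tk th expr0 invr1 mul1r -[X in X <= _]mul1r ler_wpM2r //.
    exact: ltW.
  have th'0 : 0 < (2 ^+ j)^-1 * thetabar k.
    by rewrite mulr_gt0 ?invr_gt0 ?exprn_gt0 //; lra.
  have t'0 : 0 < (2 ^+ j)^-1 * thetabar k * prevr tau taum1 k.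
    by apply: mulr_gt0.
  have [zb [x1 [z1 tr']]] := @trial_exists R m n phi Dphi f (grad hv) A b
    (x k) (z k) (prevz z k) _ (prevr sigma sigm1 k) _ prox_ok Ik t'0.
  have nacc := rej j (ltnSn j) _ _ _ _ _ tr'.
  rewrite ge_min; apply/orP; right.
  have e : (2 ^+ j)^-1 * thetabar k * prevr tau taum1 k = 2 * tau k.
    rewrite tk th exprS; field.
    by rewrite expf_neq0.
  rewrite leNgt; apply/negP => h; apply: nacc.
  apply: (@accept_ok R m n phi Dphi f hv A b delta Np L nA beta _ _ _ _ _ _ _ _ _ _ _ h_rel_smooth dp_strong hA (ltW nA0) b0 Ik t'0 _ _ tr').
    by rewrite sk; ring.
  apply: (@quad R beta nA L delta _ b0 nA0 L_pos t'0).
  rewrite e -/T2 ler_pM2l //; exact: ltW.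
have lb : forall k, (k <= K)%N -> Num.min taum1 T2 <= prevr tau taum1 k.
  elim=> [_|k IH kK] /=; first by rewrite ge_min lexx.
  apply: le_trans (step k kK).
  rewrite le_min; apply/andP; split; first exact: IH (ltnW kK).
  by rewrite ge_min lexx orbT.
move=> k kK.
have lk := lb k.+1 kK; rewrite /= in lk.
have [_ _ e] := inv k.+1 kK; rewrite /= in e.
split; first exact: lk.
by rewrite e ler_wpM2l // ltW.
Qed.
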